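(* $\mathrm{add}(\mathcal{M})\leq\mathfrak{a}(nwd)$.
   Context: $\mathcal{M}$ is the ideal of meager subsets of $2^\omega$ and $\mathrm{add}(\mathcal{M})$ its additivity. $nwd$ is the ideal on $2^{<\omega}$ of nowhere dense sets: $A\in nwd$ iff for every $\sigma\in2^{<\omega}$ there is $\tau\supseteq\sigma$ such that no extension of $\tau$ belongs to $A$. For an ideal $\mathcal{J}$, $\mathfrak{a}(\mathcal{J})$ is the smallest size of an uncountable family $\mathcal{A}$ of $\mathcal{J}$-positive sets which is maximal with respect to the property that $A\cap B\in\mathcal{J}$ for all distinct $A,B\in\mathcal{A}$. *)

(* Defs.v *)
(* 2^omega = nat -> bool ; 2^{<omega} = list bool. *)
From Stdlib Require Import List.
Import ListNotations.

Definition extends (tau sigma : list bool) : Prop := exists r, tau = sigma ++ r.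

Definition in_basic (tau : list bool) (x : nat -> bool) : Prop :=
  forall i, i < length tau -> x i = nth i tau false.

Definition nowhere_dense (X : (nat -> bool) -> Prop) : Prop :=
  forall sigma, exists tau, extends tau sigma /\
    forall x, in_basic tau x -> ~ X x.

Definition meager (X : (nat -> bool) -> Prop) : Prop :=
  exists N : nat -> (nat -> bool) -> Prop,
    (forall n, nowhere_dense (N n)) /\ (forall x, X x -> exists n, N n x).

Definition nwd (A : list bool -> Prop) : Prop :=
  forall sigma, exists tau, extends tau sigma /\
    forall rho, extends rho tau -> ~ A rho.

Definition inter (A B : list bool -> Prop) : list bool -> Prop :=
  fun s => A s /\ B s.

Definition uncountable_family (calA : (list bool -> Prop) -> Prop) : Prop :=
  ~ exists f : {A | calA A} -> nat, forall a b, f a = f b -> a = b.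

Definition nwd_mad (calA : (list bool -> Prop) -> Prop) : Prop :=
  uncountable_family calA /\
  (forall A, calA A -> ~ nwd A) /\
  (forall A B, calA A -> calA B -> A <> B -> nwd (inter A B)) /\
  (forall B, ~ nwd B -> ~ calA B ->
     ~ (forall A, calA A -> nwd (inter A B))).

(* Main.v *)
Require Import Defs.
From Stdlib Require Import List Arith Bool Lia Classical ClassicalEpsilon ProofIrrelevance Cantor.
Import ListNotations.

Definition strict (G : nat -> nat) := forall k, G k < G (S k).

Lemma strict_mono G : strict G -> forall a b, a < b -> G a < G b.
Proof.
  intros HG a b Hab. induction Hab.
  - apply HG.
  - specialize (HG m). lia.
Qed.

Lemma strict_le G : strict G -> forall a b, a <= b -> G a <= G b.
Proof.
  intros HG a b Hab. destruct (Nat.eq_dec a b). subst; lia.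
  assert (a < b) by lia. pose proof (strict_mono G HG a b H). lia.
Qed.

Lemma strict_id_le G : strict G -> forall k, k <= G k.
Proof.
  intros HG k. induction k. lia. specialize (HG k). lia.
Qed.

Fixpoint gidx (G : nat -> nat) (k : nat) : nat :=
  match k with
  | 0 => 0
  | S k' => let g := gidx G k' in if G (S g) <=? S k' then S g else g
  end.

Lemma gidx_spec G : strict G -> G 0 = 0 -> forall k, G (gidx G k) <= k < G (S (gidx G k)).
Proof.
  intros HG H0 k. induction k.
  - simpl. rewrite H0. specialize (HG 0). lia.
  - simpl. destruct (Nat.leb_spec (G (S (gidx G k))) (S k)).
    + pose proof (HG (S (gidx G k))). lia.
    + lia.
Qed.

Lemma gidx_unique G : strict G -> G 0 = 0 -> forall m k, G m <= k < G (S m) -> gidx G k = m.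
Proof.
  intros HG H0 m k Hk. pose proof (gidx_spec G HG H0 k) as Hs.
  set (g := gidx G k) in *.
  destruct (lt_eq_lt_dec g m) as [[Hlt|Heq]|Hgt]; auto.
  - pose proof (strict_le G HG (S g) m Hlt). lia.
  - pose proof (strict_le G HG (S m) g Hgt). lia.
Qed.

Lemma univ (P : list bool -> Prop) :
  (forall t r, P t -> P (t ++ r)) -> (forall t, exists r, P (t ++ r)) ->
  forall m, exists b, forall u, length u = m -> P (u ++ b).
Proof.
  intros Hup Hd m. revert P Hup Hd. induction m; intros P Hup Hd.
  - destruct (Hd []) as [r Hr]. exists r. intros u Hu. destruct u; simpl in *; [auto|discriminate].
  - set (P' := fun t => P (true :: t) /\ P (false :: t)).
    destruct (IHm P') as [b Hb].
    + intros t r [H1 H2]. split; [apply (Hup (true :: t) r H1) | apply (Hup (false :: t) r H2)].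
    + intros t. destruct (Hd (true :: t)) as [r1 Hr1].
      destruct (Hd (false :: t ++ r1)) as [r2 Hr2].
      exists (r1 ++ r2). split.
      * pose proof (Hup _ r2 Hr1) as H. simpl in H. rewrite <- app_assoc in H. exact H.
      * simpl in Hr2. rewrite <- app_assoc in Hr2. exact Hr2.
    + exists b. intros u Hu. destruct u as [|c u]; simpl in Hu; [discriminate|].
      injection Hu as Hu. destruct (Hb u Hu). destruct c; assumption.
Qed.

Lemma bound (f : list bool -> nat) M : exists L, forall r, length r <= M -> f r <= L.
Proof.
  revert f. induction M; intros f.
  - exists (f []). intros r Hr. destruct r; simpl in *; [lia|lia].
  - destruct (IHM (fun r => Nat.max (f (true :: r)) (f (false :: r)))) as [L HL].
    exists (Nat.max (f []) L). intros r Hr. destruct r as [|c r].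
    + lia.
    + simpl in Hr. specialize (HL r ltac:(lia)). destruct c; lia.
Qed.

Lemma ext_app t r : extends (t ++ r) t.
Proof. exists r; reflexivity. Qed.

Lemma ext_trans a b c : extends a b -> extends b c -> extends a c.
Proof. intros [r1 H1] [r2 H2]. subst. exists (r2 ++ r1). rewrite app_assoc; reflexivity. Qed.

Lemma ext_refl a : extends a a.
Proof. exists []. rewrite app_nil_r; reflexivity. Qed.

Lemma ext_length a b : extends a b -> length b <= length a.
Proof. intros [r H]; subst; rewrite length_app; lia. Qed.

Lemma fin_dense (Q : nat -> list bool -> Prop) (HQ : forall j, nwd (Q j)) :
  forall J t, exists r, forall j, j <= J -> forall u, extends u (t ++ r) -> ~ Q j u.
Proof.
  intros J. induction J; intros t.
  - destruct (HQ 0 t) as [tau [[r Hr] Hno]]. subst. exists r. intros j Hj u Hu.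
    assert (j = 0) by lia. subst. auto.
  - destruct (IHJ t) as [r1 Hr1].
    destruct (HQ (S J) (t ++ r1)) as [tau [[r2 Hr2] Hno]]. subst.
    exists (r1 ++ r2). intros j Hj u Hu. rewrite app_assoc in Hu.
    destruct (Nat.eq_dec j (S J)).
    + subst. auto.
    + apply (Hr1 j ltac:(lia)). eapply ext_trans; [exact Hu| apply ext_app].
Qed.

Lemma in_basic_app t r x : in_basic (t ++ r) x -> in_basic t x.
Proof.
  intros H i Hi. rewrite H by (rewrite length_app; lia). rewrite app_nth1 by lia. reflexivity.
Qed.

Lemma fin_escape (N : nat -> (nat -> bool) -> Prop) (HN : forall j, nowhere_dense (N j)) :
  forall J t, exists r, forall j, j <= J -> forall x, in_basic (t ++ r) x -> ~ N j x.
Proof.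
  intros J. induction J; intros t.
  - destruct (HN 0 t) as [tau [[r Hr] Hno]]. subst. exists r. intros j Hj x Hx.
    assert (j = 0) by lia. subst. auto.
  - destruct (IHJ t) as [r1 Hr1].
    destruct (HN (S J) (t ++ r1)) as [tau [[r2 Hr2] Hno]]. subst.
    exists (r1 ++ r2). intros j Hj x Hx. rewrite app_assoc in Hx.
    destruct (Nat.eq_dec j (S J)).
    + subst. auto.
    + apply (Hr1 j ltac:(lia)). eapply in_basic_app; exact Hx.
Qed.

Definition pre (x : nat -> bool) n := map x (seq 0 n).

Lemma pre_length x n : length (pre x n) = n.
Proof. unfold pre. rewrite length_map, length_seq. reflexivity. Qed.

Lemma pre_nth x n i : i < n -> nth i (pre x n) false = x i.
Proof.
  intros Hi. unfold pre. rewrite nth_indep with (d' := x 0) by (rewrite length_map, length_seq; lia).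
  rewrite map_nth, seq_nth by lia. reflexivity.
Qed.

Lemma seg_split (y : nat -> bool) s a b :
  map y (seq s (a + b)) = map y (seq s a) ++ map y (seq (s + a) b).
Proof. rewrite seq_app, map_app. reflexivity. Qed.

Lemma seg_nth (y : nat -> bool) s L t : t < L -> nth t (map y (seq s L)) false = y (s + t).
Proof.
  intros Ht. rewrite nth_indep with (d' := y 0) by (rewrite length_map, length_seq; lia).
  rewrite map_nth, seq_nth by lia. reflexivity.
Qed.

Fixpoint pseq (G : nat -> nat) (bf : nat -> nat -> list bool) (m : nat) : nat :=
  match m with
  | 0 => 0
  | S m' => pseq G bf m' + G (pseq G bf m') + length (bf m' (G (pseq G bf m'))) + 1
  end.

Lemma char (N : nat -> (nat -> bool) -> Prop) (HN : forall j, nowhere_dense (N j))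
  (G : nat -> nat) (HG : strict G) (HG0 : G 0 = 0) :
  exists (y : nat -> bool) (p : nat -> nat), strict p /\ p 0 = 0 /\
   forall x, (forall M, exists m, M <= m /\ forall k, G (p m) <= k < G (p (S m)) -> x k = y k) ->
   forall j, ~ N j x.
Proof.
  set (Esc := fun m t => forall j, j <= m -> forall x, in_basic t x -> ~ N j x).
  assert (Hb : forall ms : nat * nat, exists b, forall u, length u = snd ms -> Esc (fst ms) (u ++ b)).
  { intros [m s]. simpl. apply univ.
    - intros t r Ht j Hj x Hx. apply (Ht j Hj x). eapply in_basic_app; eauto.
    - intros t. apply fin_escape; auto. }
  destruct (choice _ Hb) as [bf0 Hbf0].
  set (bf := fun m s => bf0 (m, s)).
  set (p := pseq G bf).
  assert (Hp : strict p). { intros k. unfold p; simpl. lia. }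
  assert (HGp : strict (fun m => G (p m))). { intros k. apply strict_mono; auto. }
  assert (HGp0 : G (p 0) = 0). { unfold p; simpl; auto. }
  exists (fun k => let m := gidx (fun m => G (p m)) k in nth (k - G (p m)) (bf m (G (p m))) false), p.
  split; [exact Hp|split; [reflexivity|]].
  intros x Hx j. destruct (Hx j) as [m [Hjm Hm]].
  set (s := G (p m)). set (b := bf m s).
  assert (HpS : p (S m) = p m + s + length b + 1) by reflexivity.
  assert (Hin : in_basic (pre x s ++ b) x).
  { intros i Hi. rewrite length_app, pre_length in Hi.
    destruct (lt_dec i s).
    - rewrite app_nth1 by (rewrite pre_length; lia). rewrite pre_nth; auto.
    - rewrite app_nth2 by (rewrite pre_length; lia). rewrite pre_length.
      assert (Hlt : i < G (p (S m))).
      { pose proof (strict_id_le G HG (p (S m))). lia. }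
      rewrite (Hm i ltac:(lia)). cbv zeta.
      rewrite (gidx_unique _ HGp HGp0 m i) by lia. reflexivity. }
  exact (Hbf0 (m, s) (pre x s) (pre_length x s) j Hjm x Hin).
Qed.

Definition AddHyp (Ix : Type) := forall F : Ix -> (nat -> bool) -> Prop,
  (forall i, meager (F i)) -> meager (fun x => exists i, F i x).

Fixpoint chs (P : nat -> Prop) (n : nat) : Prop :=
  match n with 0 => P 0 | S n' => P (S n') /\ ~ chs P n' end.

Lemma chs_P P n : chs P n -> P n.
Proof. destruct n; simpl; tauto. Qed.

Lemma chs_inf (P : nat -> Prop) : (forall M, exists n, M <= n /\ P n) ->
  forall M, exists m, M <= m /\ chs P m.
Proof.
  intros HP M. destruct (HP (S M)) as [n [Hn Pn]].
  destruct n as [|n']; [lia|].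
  destruct (classic (chs P (S n'))) as [Hc|Hc].
  - exists (S n'); split; auto; lia.
  - exists n'. split; [lia|]. apply NNPP. intro Hn'. apply Hc. simpl. auto.
Qed.

Lemma domin (Ix : Type) (H : AddHyp Ix) (f : Ix -> nat -> nat)
  (Hmono : forall i n m, n <= m -> f i n <= f i m) (Hid : forall i n, n <= f i n) :
  exists D : nat -> nat, forall i, exists N0, forall n, N0 <= n -> f i n <= D n.
Proof.
  set (Z := fun i N0 (x : nat -> bool) => forall n, N0 <= n -> exists k, n <= k <= f i n /\ x k = true).
  set (F := fun i x => exists N0, Z i N0 x).
  assert (HF : forall i, meager (F i)).
  { intros i. exists (Z i). split; [|intros x Hx; exact Hx].
    intros N0 sigma. set (n := N0 + length sigma).
    exists (sigma ++ repeat false (S (f i n) - length sigma)). split; [apply ext_app|].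
    intros x Hx HZ. destruct (HZ n ltac:(unfold n; lia)) as [k [Hk Hxk]].
    pose proof (Hid i n).
    rewrite Hx in Hxk by (rewrite length_app, repeat_length; unfold n in *; lia).
    rewrite app_nth2 in Hxk by (unfold n in *; lia).
    rewrite nth_repeat in Hxk. discriminate. }
  destruct (H F HF) as [Nc [HNc Hcov]].
  destruct (char Nc HNc (fun k => k) ltac:(intro; lia) eq_refl) as [y [a [Ha [Ha0 Hchar]]]].
  exists (fun n => a (S (S n))). intros i.
  apply NNPP. intros Hno.
  set (P := fun n => a (S (S n)) < f i n).
  assert (HP : forall M, exists n, M <= n /\ P n).
  { intros M. apply NNPP. intro HM. apply Hno. exists M. intros n Hn.
    apply NNPP. intro Hc. apply HM. exists n. split; auto. unfold P. lia. }
  pose proof (chs_inf P HP) as HC.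
  set (x := fun k => if excluded_middle_informative (exists m, chs P m /\ a m <= k < a (S m))
                     then y k else true).
  assert (Huniq : forall m m' k, a m <= k < a (S m) -> a m' <= k < a (S m') -> m = m').
  { intros m m' k H1 H2. rewrite <- (gidx_unique a Ha Ha0 m k H1). apply gidx_unique; auto. }
  assert (HFx : F i x).
  { exists 0. intros n _. destruct (bool_dec (x n) true) as [Ht|Hf].
    - exists n. split; auto.
    - unfold x in Hf. destruct (excluded_middle_informative _) as [[m [Hm Hnm]]|Hn]; [|congruence].
      exists (a (S m)). pose proof (chs_P _ _ Hm) as Pm. unfold P in Pm.
      pose proof (strict_id_le a Ha m).
      pose proof (Hmono i m n ltac:(lia)). pose proof (Ha (S m)).
      split; [lia|].
      unfold x. destruct (excluded_middle_informative _) as [[m' [Hm' Hr]]|_]; [|reflexivity].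
      assert (m' = S m) by (apply (Huniq m' (S m) (a (S m))); auto; pose proof (Ha (S m)); lia).
      subst m'. simpl in Hm'. tauto. }
  destruct (Hcov x (ex_intro _ i HFx)) as [j Hj].
  refine (Hchar x _ j Hj).
  intros M. destruct (HC M) as [m [HMm Hm]]. exists m. split; auto.
  intros k Hk. unfold x. destruct (excluded_middle_informative _) as [_|Hn]; auto.
  exfalso. apply Hn. exists m. auto.
Qed.

Definition blk (l : nat -> nat) (x : nat -> bool) k := map x (seq (l k) (l (S k) - l k)).

Lemma range_gidx l (Hl : strict l) (Hl0 : l 0 = 0) p (Hp : strict p) m k :
  l (p m) <= k < l (p (S m)) -> p m <= gidx l k < p (S m).
Proof.
  intros Hk. pose proof (gidx_spec l Hl Hl0 k) as Hs. set (g := gidx l k) in *.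
  split.
  - destruct (le_lt_dec (p m) g); auto. pose proof (strict_le l Hl (S g) (p m) l0). lia.
  - destruct (le_lt_dec (p (S m)) g); auto. pose proof (strict_le l Hl (p (S m)) g l0). lia.
Qed.

Lemma matching (Ix : Type) (H : AddHyp Ix) (l : nat -> nat) (Hl : strict l) (Hl0 : l 0 = 0)
  (U : Ix -> nat -> list bool) (HU : forall i k, length (U i k) = l (S k) - l k) :
  exists (y : nat -> bool) (p : nat -> nat), strict p /\ p 0 = 0 /\
    forall i, exists M, forall m, M <= m -> exists k, p m <= k < p (S m) /\ blk l y k = U i k.
Proof.
  set (Z := fun i N0 (x : nat -> bool) => forall k, N0 <= k -> blk l x k <> U i k).
  set (F := fun i x => exists N0, Z i N0 x).
  assert (HF : forall i, meager (F i)).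
  { intros i. exists (Z i). split; [|intros x Hx; exact Hx].
    intros N0 sigma. set (k := N0 + length sigma).
    pose proof (strict_id_le l Hl k) as Hlk.
    exists ((sigma ++ repeat false (l k - length sigma)) ++ U i k). split.
    { rewrite <- app_assoc. apply ext_app. }
    intros x Hx HZ. apply (HZ k ltac:(unfold k; lia)).
    assert (Hlen : length (sigma ++ repeat false (l k - length sigma)) = l k).
    { rewrite length_app, repeat_length. unfold k in *; lia. }
    apply nth_ext with (d := false) (d' := false).
    - unfold blk. rewrite length_map, length_seq, HU. reflexivity.
    - intros t Ht. unfold blk in Ht. rewrite length_map, length_seq in Ht.
      unfold blk. rewrite seg_nth by lia.
      rewrite Hx by (rewrite length_app, Hlen, HU; lia).
      rewrite app_nth2 by lia. rewrite Hlen. f_equal. lia. }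
  destruct (H F HF) as [Nc [HNc Hcov]].
  destruct (char Nc HNc l Hl Hl0) as [y [p [Hp [Hp0 Hchar]]]].
  exists y, p. split; [exact Hp|split; [exact Hp0|]].
  intros i. apply NNPP. intro Hno.
  set (Bad := fun m => forall k, p m <= k < p (S m) -> blk l y k <> U i k).
  assert (HB : forall M, exists m, M <= m /\ Bad m).
  { intros M. apply NNPP. intro HM. apply Hno. exists M. intros m Hm.
    apply NNPP. intro Hc. apply HM. exists m. split; auto. intros k Hk Heq. apply Hc. exists k. auto. }
  set (x := fun k' => let g := gidx l k' in
             if excluded_middle_informative (exists m, Bad m /\ p m <= g < p (S m))
             then y k' else negb (nth (k' - l g) (U i g) false)).
  assert (HFx : F i x).
  { exists 0. intros k _ Heq.
    assert (Hpos : l k < l (S k)) by apply Hl.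
    assert (Hg : forall k', l k <= k' < l (S k) -> gidx l k' = k) by (intros; apply gidx_unique; auto).
    destruct (excluded_middle_informative (exists m, Bad m /\ p m <= k < p (S m))) as [[m [Bm Hm]]|Hn].
    - apply (Bm k Hm). rewrite <- Heq. unfold blk. apply map_ext_in.
      intros k' Hk'. apply in_seq in Hk'. unfold x. cbv zeta. rewrite (Hg k') by lia.
      destruct (excluded_middle_informative _) as [_|Hn']; auto.
      exfalso. apply Hn'. exists m. auto.
    - assert (H0 : nth 0 (blk l x k) false = nth 0 (U i k) false) by (rewrite Heq; auto).
      unfold blk in H0. rewrite seg_nth in H0 by lia. rewrite Nat.add_0_r in H0.
      unfold x in H0. cbv zeta in H0. rewrite (Hg (l k)) in H0 by lia.
      destruct (excluded_middle_informative _) as [Hc|_]; [contradiction|].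
      rewrite Nat.sub_diag in H0. destruct (nth 0 (U i k) false); discriminate. }
  destruct (Hcov x (ex_intro _ i HFx)) as [j Hj].
  refine (Hchar x _ j Hj).
  intros M. destruct (HB M) as [m [HMm Bm]]. exists m. split; auto.
  intros k' Hk'. unfold x. cbv zeta.
  destruct (excluded_middle_informative _) as [_|Hn]; auto.
  exfalso. apply Hn. exists m. split; auto. apply range_gidx; auto.
Qed.

Fixpoint sumto (h : nat -> nat) n := match n with 0 => h 0 | S n' => sumto h n' + h (S n') end.

Lemma sumto_mono h n m : n <= m -> sumto h n <= sumto h m.
Proof. intros Hnm. induction Hnm; simpl; lia. Qed.

Lemma sumto_ge h n : h n <= sumto h n.
Proof. destruct n; simpl; lia. Qed.

Fixpoint grid (D : nat -> nat) k := match k with 0 => 0 | S k' => grid D k' + D (grid D k') + 1 end.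

Lemma core (Ix : Type) (S0 : Ix -> nat -> list bool -> Prop) (HS : forall i j, nwd (S0 i j))
  (H : AddHyp Ix) :
  exists e : list bool -> list bool, (forall r, extends (e r) r) /\
    forall i, exists N0, forall r, N0 <= length r -> forall j, j <= length r ->
      forall u, extends u (e r) -> ~ S0 i j u.
Proof.
  set (Clean := fun i J t => forall j, j <= J -> forall u, extends u t -> ~ S0 i j u).
  assert (Hup : forall i J t r, Clean i J t -> Clean i J (t ++ r)).
  { intros i J t r Ht j Hj u Hu. apply (Ht j Hj). eapply ext_trans; [exact Hu|apply ext_app]. }
  assert (Hub : forall im : Ix * nat, exists b, forall u, length u = snd im -> Clean (fst im) (snd im) (u ++ b)).
  { intros [i m]. simpl. apply univ; [apply Hup|]. intros t. apply fin_dense. intro; apply HS. }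
  destruct (choice _ Hub) as [ub0 Hub0].
  set (ub := fun i m => ub0 (i, m)).
  set (f := fun i n => n + sumto (fun m => length (ub i m)) n).
  destruct (domin Ix H f) as [D HD].
  { intros i n m Hnm. unfold f. pose proof (sumto_mono (fun m => length (ub i m)) n m Hnm). lia. }
  { intros i n. unfold f. lia. }
  set (l := grid D).
  assert (Hl : strict l) by (intro k; unfold l; simpl; lia).
  assert (Hl0 : l 0 = 0) by reflexivity.
  set (U := fun i k => firstn (l (S k) - l k) (ub i (l k) ++ repeat false (l (S k) - l k))).
  assert (HU : forall i k, length (U i k) = l (S k) - l k).
  { intros i k. unfold U. rewrite length_firstn, length_app, repeat_length. lia. }
  assert (Hkey : forall i, exists K, forall k, K <= k -> forall u, length u = l k -> Clean i (l k) (u ++ U i k)).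
  { intros i. destruct (HD i) as [N0 HN0]. exists N0. intros k Hk u Hu.
    pose proof (strict_id_le l Hl k).
    pose proof (HN0 (l k) ltac:(lia)) as Hf. unfold f in Hf.
    pose proof (sumto_ge (fun m => length (ub i m)) (l k)) as Hs. simpl in Hs.
    assert (Hlam : l (S k) - l k = D (l k) + 1) by (unfold l; simpl; lia).
    assert (HUeq : exists r, U i k = ub i (l k) ++ r).
    { unfold U. rewrite firstn_app. rewrite firstn_all2 by lia. eexists; reflexivity. }
    destruct HUeq as [r Hr]. rewrite Hr, app_assoc. apply Hup.
    exact (Hub0 (i, l k) u Hu). }
  destruct (matching Ix H l Hl Hl0 U HU) as [y [p [Hp [Hp0 Hmatch]]]].
  set (e := fun r => let n := length r in
              (r ++ repeat false (l (p n) - n)) ++ map y (seq (l (p n)) (l (p (S n)) - l (p n)))).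
  exists e. split.
  { intros r. unfold e. rewrite <- app_assoc. apply ext_app. }
  intros i. destruct (Hmatch i) as [M HM]. destruct (Hkey i) as [K HK].
  exists (M + K). intros r Hr j Hj u Hu.
  set (n := length r) in *.
  destruct (HM n ltac:(lia)) as [k [Hk Hblk]].
  pose proof (strict_id_le p Hp n). pose proof (strict_id_le l Hl (p n)).
  pose proof (strict_id_le l Hl k). pose proof (strict_le l Hl (p n) k ltac:(lia)).
  pose proof (strict_le l Hl (S k) (p (S n)) ltac:(lia)). pose proof (Hl k).
  assert (Hdec : e r = (((r ++ repeat false (l (p n) - n)) ++ map y (seq (l (p n)) (l k - l (p n))))
                         ++ U i k) ++ map y (seq (l (S k)) (l (p (S n)) - l (S k)))).
  { unfold e. fold n.
    replace (l (p (S n)) - l (p n)) with ((l k - l (p n)) + ((l (S k) - l k) + (l (p (S n)) - l (S k)))) by lia.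
    rewrite !seg_split. rewrite <- Hblk. unfold blk.
    replace (l (p n) + (l k - l (p n))) with (l k) by lia.
    replace (l k + (l (S k) - l k)) with (l (S k)) by lia.
    rewrite !app_assoc. reflexivity. }
  assert (HC : Clean i (l k) (e r)).
  { rewrite Hdec. apply Hup. apply HK; [lia|].
    rewrite !length_app, repeat_length, length_map, length_seq. fold n. lia. }
  apply (HC j ltac:(lia) u Hu).
Qed.

Fixpoint code (l : list bool) : nat :=
  match l with [] => 0 | b :: l' => S (Cantor.to_nat (Nat.b2n b, code l')) end.

Lemma to_nat_inj a b : Cantor.to_nat a = Cantor.to_nat b -> a = b.
Proof. intros H. rewrite <- (cancel_of_to a), <- (cancel_of_to b), H. reflexivity. Qed.

Lemma code_inj l1 l2 : code l1 = code l2 -> l1 = l2.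
Proof.
  revert l2. induction l1 as [|b l1 IH]; intros [|c l2]; intros H; cbn [code] in H; try discriminate; auto.
  apply Nat.succ_inj in H. apply to_nat_inj in H. injection H as Hb Hl.
  apply IH in Hl. subst. destruct b, c; simpl in Hb; congruence.
Qed.

Definition dense_below (A : list bool -> Prop) s := forall t, extends t s -> exists u, extends u t /\ A u.

Lemma pos_dense A : ~ nwd A -> exists s, dense_below A s.
Proof.
  intros Hn. apply NNPP. intro Hno. apply Hn. intros s.
  apply NNPP. intro Hs. apply Hno. exists s. intros t Ht.
  apply NNPP. intro Hu. apply Hs. exists t. split; auto.
  intros r Hr HA. apply Hu. exists r. auto.
Qed.

Fixpoint lst {T} (pick : list T -> T) n : list T :=
  match n with 0 => [] | S n' => pick (lst pick n') :: lst pick n' end.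

Lemma lst_in {T} (pick : list T -> T) m n : m < n -> In (pick (lst pick m)) (lst pick n).
Proof.
  intros H. induction H; simpl; auto.
Qed.

Theorem mainTheorem19 :
  forall calA : (list bool -> Prop) -> Prop,
    nwd_mad calA ->
    exists (I : Type) (F : I -> (nat -> bool) -> Prop) (g : I -> {A | calA A}),
      (forall i j, g i = g j -> i = j) /\
      (forall i, meager (F i)) /\
      ~ meager (fun x => exists i, F i x).
Proof.
  intros calA [Hunc [Hpos [Had Hmax]]].
  apply NNPP. intro G.
  set (T := {A | calA A}).
  assert (H : AddHyp T).
  { intros F HF. apply NNPP. intro Hnm. apply G. exists T, F, (fun a => a). auto. }
  assert (Hinf : exists s, forall L : list T, exists a : T, dense_below (proj1_sig a) s /\
                    forall b, In b L -> proj1_sig b <> proj1_sig a).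
  { apply NNPP. intro Hno.
    assert (HL : forall s, exists L : list T, forall a : T, dense_below (proj1_sig a) s ->
                   exists b, In b L /\ proj1_sig b = proj1_sig a).
    { intros s. apply NNPP. intro HL. apply Hno. exists s. intros L.
      apply NNPP. intro Ha. apply HL. exists L. intros a Hd.
      apply NNPP. intro Hb. apply Ha. exists a. split; auto.
      intros b Hin Heq. apply Hb. exists b. auto. }
    destruct (choice _ HL) as [Lf HLf].
    assert (Hs : forall a : T, exists s, dense_below (proj1_sig a) s).
    { intros a. apply pos_dense. apply Hpos. exact (proj2_sig a). }
    destruct (choice _ Hs) as [sf Hsf].
    assert (Hk : forall a : T, exists k, exists b, nth_error (Lf (sf a)) k = Some b /\ proj1_sig b = proj1_sig a).
    { intros a. destruct (HLf (sf a) a (Hsf a)) as [b [Hin Heq]].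
      apply In_nth_error in Hin. destruct Hin as [k Hk]. exists k, b. auto. }
    destruct (choice _ Hk) as [kf Hkf].
    apply Hunc. exists (fun a => Cantor.to_nat (code (sf a), kf a)).
    intros a b Hab. apply to_nat_inj in Hab. injection Hab as Hs1 Hk1.
    apply code_inj in Hs1.
    destruct (Hkf a) as [ba [Ha1 Ha2]]. destruct (Hkf b) as [bb [Hb1 Hb2]].
    rewrite Hs1, Hk1, Hb1 in Ha1. injection Ha1 as Ha1. subst ba.
    destruct a as [a pa], b as [b pb]. simpl in *. assert (a = b) by congruence. subst.
    f_equal. apply proof_irrelevance. }
  destruct Hinf as [s0 Hs0].
  destruct (choice _ Hs0) as [pick Hpick].
  set (An := fun n => pick (lst pick n)).
  assert (HAn_dense : forall n, dense_below (proj1_sig (An n)) s0).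
  { intros n. apply (Hpick (lst pick n)). }
  assert (HAn_dist : forall n m, n <> m -> proj1_sig (An n) <> proj1_sig (An m)).
  { intros n m Hnm. destruct (lt_dec n m).
    - apply (Hpick (lst pick m)). apply lst_in; auto.
    - intro Heq. symmetry in Heq. revert Heq. apply (Hpick (lst pick n)). apply lst_in; lia. }
  set (S0 := fun (i : T) n u => proj1_sig i u /\ proj1_sig (An n) u /\ proj1_sig i <> proj1_sig (An n)).
  assert (HS : forall i j, nwd (S0 i j)).
  { intros i j. destruct (classic (proj1_sig i = proj1_sig (An j))) as [Heq|Hne].
    - intros s. exists s. split; [apply ext_refl|]. intros r _ [_ [_ Hc]]. contradiction.
    - pose proof (Had _ _ (proj2_sig i) (proj2_sig (An j)) Hne) as Hn.
      intros s. destruct (Hn s) as [t [Ht Hno]]. exists t. split; auto.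
      intros r Hr [H1 [H2 _]]. apply (Hno r Hr). split; auto. }
  destruct (core T S0 HS H) as [e [He Hclean]].
  assert (Hw : forall r, exists u, extends r s0 -> extends u (e r) /\ proj1_sig (An (length r)) u).
  { intros r. destruct (classic (extends r s0)) as [Hr|Hr].
    - destruct (HAn_dense (length r) (e r) (ext_trans _ _ _ (He r) Hr)) as [u Hu]. exists u. auto.
    - exists []. intro; contradiction. }
  destruct (choice _ Hw) as [w Hwf].
  set (B := fun u => exists r, extends r s0 /\ u = w r).
  assert (HBpos : ~ nwd B).
  { intros HB. destruct (HB s0) as [t [Ht Hno]]. apply (Hno (w t)).
    - destruct (Hwf t Ht) as [H1 _]. eapply ext_trans; [exact H1|apply He].
    - exists t. auto. }
  assert (Hall : forall A, calA A -> nwd (inter A B)).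
  { intros A HA. set (i := exist _ A HA : T).
    destruct (Hclean i) as [N0 HN0].
    assert (HM : exists M, forall r, extends r s0 -> M < length r -> ~ A (w r)).
    { destruct (classic (exists j, A = proj1_sig (An j))) as [[j Hj]|Hnj].
      - exists (N0 + j). intros r Hr Hlen HAw.
        destruct (Hwf r Hr) as [H1 H2].
        apply (HN0 r ltac:(lia) (length r) (le_n _) (w r) H1).
        split; [exact HAw|split; [exact H2|]]. simpl. intro Heq.
        apply (HAn_dist j (length r) ltac:(lia)). congruence.
      - exists N0. intros r Hr Hlen HAw.
        destruct (Hwf r Hr) as [H1 H2].
        apply (HN0 r ltac:(lia) (length r) (le_n _) (w r) H1).
        split; [exact HAw|split; [exact H2|]]. simpl. intro Heq. apply Hnj. eauto. }
    destruct HM as [M HM].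
    destruct (bound (fun r => length (w r)) M) as [L HL].
    intros s. exists (s ++ repeat false (S L)). split; [apply ext_app|].
    intros u Hu [HAu [r [Hr Heq]]]. subst u.
    destruct (le_lt_dec (length r) M) as [Hle|Hlt].
    + pose proof (HL r Hle). apply ext_length in Hu. rewrite length_app, repeat_length in Hu. simpl in *. lia.
    + exact (HM r Hr Hlt HAu). }
  assert (HBnot : ~ calA B).
  { intros HcB. apply HBpos. pose proof (Hall B HcB) as Hn.
    intros s. destruct (Hn s) as [t [Ht Hno]]. exists t. split; auto.
    intros r Hr Hb. apply (Hno r Hr). split; auto. }
  exact (Hmax B HBpos HBnot Hall).
Qed.
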